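(* Let $n\geqslant 3$ and $N=2^n-1$. Let $\mathcal{A}_0$ be the set of $(\mathbf{x}';(z_h)_{1\leqslant h\leqslant N})$ with $x'_i\in\mathbb{Z}$, $z_h\in\mathbb{N}$ (positive integers) if $s(h)>1$ and $z_h\in\mathbb{Z}\smallsetminus\{0\}$ if $s(h)=1$, satisfying $$\sum_{i=1}^n x'_i\prod_{\substack{1\leqslant h\leqslant N,\ h\neq N\\ s(h)\geqslant 2}}z_h^{1-\varepsilon_i(h)}=0,$$ the coprimality condition $\gcd(z_N,x'_1z_1,x'_2z_2,\dots,x'_nz_{2^{n-1}})=1$, and such that $(z_h)$ is reduced. Then the map $$(\mathbf{x}';(z_h))\longmapsto\Big(z_1x'_1,\dots,z_{2^{n-1}}x'_n,\ \prod_h z_h^{\varepsilon_1(h)},\dots,\prod_h z_h^{\varepsilon_n(h)}\Big)$$ is a bijection from $\mathcal{A}_0$ onto the set of $(x_1,\dots,x_n,y_1,\dots,y_n)\in\mathbb{Z}^{2n}$ with $y_1\cdots y_n\neq 0$, $\sum_{i=1}^nx_i\prod_{j\neq i}y_j=0$ and $\gcd(x_1,\dots,x_n,y_1,\dots,y_n)=1$. Moreover, for elements $(\mathbf{x}';(z_h))$ satisfying the other conditions defining $\mathcal{A}_0$, the condition $\gcd(z_N,x'_1z_1,\dots,x'_nz_{2^{n-1}})=1$ is equivalent to $\gcd(x_1,\dots,x_n,y_1,\dots,y_n)=1$ for the image.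
   Context: For $h\in\{1,\dots,N\}$ write $h=\sum_j\varepsilon_j(h)2^{j-1}$ with $\varepsilon_j(h)\in\{0,1\}$ and $s(h)=\sum_j\varepsilon_j(h)$; $h\preceq\ell$ means $\varepsilon_j(h)\leqslant\varepsilon_j(\ell)$ for all $j$. The tuple $(z_h)$ is reduced if $\gcd(z_h,z_\ell)=1$ whenever $h,\ell$ are $\preceq$-incomparable. $z_{2^{j-1}}$ denotes the entry with index $h=2^{j-1}$. *)

(* Defs.v *)
From mathcomp Require Import all_boot all_order all_algebra.
Set Implicit Arguments. Unset Strict Implicit. Unset Printing Implicit Defensive.
Import GRing.Theory Num.Theory.

Definition Nn (n : nat) : nat := (2 ^ n).-1.

(* eps j h = epsilon_{j+1}(h) : the bit of weight 2^j of h (j is 0-based) *)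
Definition eps (j h : nat) : nat := (h %/ 2 ^ j) %% 2.

Definition bitsum (n h : nat) : nat := \sum_(j < n) eps j h.

Definition prec (n h l : nat) : bool := [forall j : 'I_n, eps j h <= eps j l].

Local Open Scope ring_scope.

(* z_h, for a tuple z = (z_1,...,z_N) stored as z : {ffun 'I_N -> int},
   entry k : 'I_N being z_(k+1); value 0 outside 1..N (never used) *)
Definition zh (N : nat) (z : {ffun 'I_N -> int}) (h : nat) : int :=
  match (insub h.-1 : option 'I_N) with Some k => z k | None => 0 end.

Definition gcdzs (s : seq int) : int := foldr gcdz 0 s.

Definition A0_eq (n : nat) (x' : {ffun 'I_n -> int}) (z : {ffun 'I_(Nn n) -> int}) : Prop :=
  \sum_(i < n) x' i *
     \prod_(1 <= h < (Nn n).+1 | (h != Nn n) && (2 <= bitsum n h)%N)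
        zh z h ^+ (1 - eps i h) = 0.

Definition A0_gcd (n : nat) (x' : {ffun 'I_n -> int}) (z : {ffun 'I_(Nn n) -> int}) : Prop :=
  gcdzs (zh z (Nn n) :: [seq x' i * zh z (2 ^ i) | i <- enum 'I_n]) = 1.

Definition A0_sign (n : nat) (z : {ffun 'I_(Nn n) -> int}) : Prop :=
  forall h : nat, (1 <= h <= Nn n)%N ->
    if (1 < bitsum n h)%N then 0 < zh z h else zh z h != 0.

Definition reduced (n : nat) (z : {ffun 'I_(Nn n) -> int}) : Prop :=
  forall h l : nat, (1 <= h <= Nn n)%N -> (1 <= l <= Nn n)%N ->
    ~~ prec n h l -> ~~ prec n l h -> gcdz (zh z h) (zh z l) = 1.

Definition A0 (n : nat) (a : {ffun 'I_n -> int} * {ffun 'I_(Nn n) -> int}) : Prop :=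
  [/\ A0_eq a.1 a.2, A0_gcd a.1 a.2, A0_sign a.2 & reduced a.2].

Definition phi (n : nat) (a : {ffun 'I_n -> int} * {ffun 'I_(Nn n) -> int})
  : {ffun 'I_n -> int} * {ffun 'I_n -> int} :=
  ([ffun i : 'I_n => zh a.2 (2 ^ i) * a.1 i],
   [ffun j : 'I_n => \prod_(1 <= h < (Nn n).+1) zh a.2 h ^+ eps j h]).

Definition B_gcd (n : nat) (b : {ffun 'I_n -> int} * {ffun 'I_n -> int}) : Prop :=
  gcdzs ([seq b.1 i | i <- enum 'I_n] ++ [seq b.2 i | i <- enum 'I_n]) = 1.

Definition Bset (n : nat) (b : {ffun 'I_n -> int} * {ffun 'I_n -> int}) : Prop :=
  [/\ \prod_(i < n) b.2 i != 0,
      \sum_(i < n) b.1 i * \prod_(j < n | j != i) b.2 j = 0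
    & B_gcd b].

(* Main.v *)
Require Import Defs.
From mathcomp Require Import all_boot all_order all_algebra zify.
Import GRing.Theory Num.Theory.
Set Implicit Arguments. Unset Strict Implicit. Unset Printing Implicit Defensive.

Lemma eps_le1 j h : eps j h <= 1.
Proof. by rewrite /eps -ltnS ltn_pmod. Qed.

Lemma eps0 j h : eps 0 h = h %% 2 /\ eps j.+1 h = eps j (h %/ 2).
Proof. by rewrite /eps expn0 divn1 expnS divnMA. Qed.

Lemma eps_sum (f : nat -> bool) m k :
  eps k (\sum_(j < m) f j * 2 ^ j) = (k < m) && f k.
Proof.
elim: m f k => [|m IH] f k.
  by rewrite big_ord0 /eps div0n mod0n.
rewrite big_ord_recl /= expn0 muln1.
have -> : \sum_(i < m) f (bump 0 i) * 2 ^ bump 0 i = (\sum_(i < m) f i.+1 * 2 ^ i) * 2.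
  rewrite big_distrl /=; apply: eq_bigr => i _; by rewrite /bump /= add1n expnS mulnCA mulnC.
case: k => [|k].
  have [-> _] := eps0 0 (f 0 + (\sum_(i < m) f i.+1 * 2 ^ i) * 2).
  by rewrite addnC modnMDl; case: (f 0).
have [_ ->] := eps0 k (f 0 + (\sum_(i < m) f i.+1 * 2 ^ i) * 2).
rewrite addnC divnMDl // divn_small ?addn0; last by case: (f 0).
idtac; exact: (IH (fun i => f i.+1)).
Qed.

Lemma sum_lt (f : nat -> bool) m : \sum_(j < m) f j * 2 ^ j < 2 ^ m.
Proof.
elim: m f => [|m IH] f; first by rewrite big_ord0.
rewrite big_ord_recl /= expn0 muln1.
have -> : \sum_(i < m) f (bump 0 i) * 2 ^ bump 0 i = (\sum_(i < m) f i.+1 * 2 ^ i) * 2.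
  rewrite big_distrl /=; apply: eq_bigr => i _; by rewrite /bump /= add1n expnS mulnCA mulnC.
have := IH (fun i => f i.+1); rewrite expnS; case: (f 0) => /=; lia.
Qed.

Lemma bin_exp m h : h < 2 ^ m -> h = \sum_(j < m) (eps j h == 1) * 2 ^ j.
Proof.
elim: m h => [|m IH] h hlt.
  by rewrite big_ord0; move: hlt; rewrite expn0; case: h.
rewrite big_ord_recl /= expn0 muln1.
have -> : \sum_(i < m) (eps (bump 0 i) h == 1) * 2 ^ bump 0 i
   = (\sum_(i < m) (eps i (h %/ 2) == 1) * 2 ^ i) * 2.
  rewrite big_distrl /=; apply: eq_bigr => i _.
  have [_ ->] := eps0 i h.
  by rewrite /bump /= add1n expnS mulnCA mulnC.
rewrite -IH; last by move: hlt; rewrite expnS; lia.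
have [-> _] := eps0 0 h.
have := divn_eq h 2; have := ltn_pmod h (isT : 0 < 2).
case: (h %% 2) => [|[|]] //=; lia.
Qed.

Lemma eps_big m k h : h < 2 ^ m -> m <= k -> eps k h = 0.
Proof.
move=> hlt mk; rewrite (@bin_exp m h hlt) (eps_sum (fun j => eps j h == 1)).
by rewrite ltnNge mk.
Qed.

Lemma bits_eq m h l : h < 2 ^ m -> l < 2 ^ m ->
  (forall j : 'I_m, eps j h = eps j l) -> h = l.
Proof.
move=> hh hl E; rewrite (@bin_exp m h hh) (@bin_exp m l hl).
by apply: eq_bigr => j _; rewrite E.
Qed.

Definition code n (b : 'I_n -> bool) : nat := \sum_(j < n) b j * 2 ^ j.

Definition extb n (b : 'I_n -> bool) (j : nat) : bool :=
  if insub j is Some k then b k else false.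

Lemma extb_ord n (b : 'I_n -> bool) (k : 'I_n) : extb b k = b k.
Proof. by rewrite /extb valK. Qed.

Lemma code_ext n (b : 'I_n -> bool) : code b = \sum_(j < n) extb b j * 2 ^ j.
Proof. by apply: eq_bigr => j _; rewrite extb_ord. Qed.

Lemma eps_code n (b : 'I_n -> bool) (k : 'I_n) : eps k (code b) = b k.
Proof. by rewrite code_ext eps_sum ltn_ord extb_ord. Qed.

Lemma code_lt n (b : 'I_n -> bool) : code b < 2 ^ n.
Proof. by rewrite code_ext sum_lt. Qed.

Lemma leN n h : (h <= Nn n) = (h < 2 ^ n).
Proof. rewrite /Nn; have : 0 < 2 ^ n by rewrite expn_gt0. lia. Qed.

Lemma code_leN n (b : 'I_n -> bool) : code b <= Nn n.
Proof. by rewrite leN code_lt. Qed.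

Lemma code_true n : code (fun _ : 'I_n => true) = Nn n.
Proof.
rewrite /code /Nn; elim: n => [|n IH]; first by rewrite big_ord0.
rewrite big_ord_recr /= IH expnS; have : 0 < 2 ^ n by rewrite expn_gt0. lia.
Qed.

Lemma eps_N n (j : 'I_n) : eps j (Nn n) = 1.
Proof. by rewrite -code_true eps_code. Qed.

Lemma code_delta n (i : 'I_n) : code (fun k : 'I_n => k == i) = 2 ^ i.
Proof.
rewrite /code (bigD1 i) //= eqxx mul1n big1 ?addn0 // => k /negbTE ->; by rewrite mul0n.
Qed.

Lemma eps_pow n (i k : 'I_n) : eps k (2 ^ i) = (k == i).
Proof. by rewrite -code_delta eps_code. Qed.

Lemma pow_range n (i : 'I_n) : 1 <= 2 ^ i <= Nn n.
Proof. by rewrite expn_gt0 /= -code_delta code_leN. Qed.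

Lemma code_pos n (b : 'I_n -> bool) k : b k -> 1 <= code b.
Proof.
move=> bk; case E: (code b) => //.
by have := eps_code b k; rewrite E /eps div0n mod0n bk.
Qed.

Lemma bits_eqN n h l : h <= Nn n -> l <= Nn n ->
  (forall j : 'I_n, eps j h = eps j l) -> h = l.
Proof. rewrite !leN; exact: bits_eq. Qed.

Lemma exists_bit n h : 1 <= h <= Nn n -> exists j : 'I_n, eps j h = 1.
Proof.
case/andP=> h1; rewrite leN => hlt.
case: (pickP (fun j : 'I_n => eps j h == 1)) => [j /eqP ej | H]; first by exists j.
move: h1; rewrite (@bin_exp n h hlt) big1 // => j _.
by rewrite H.
Qed.

Lemma bitsum_pos n h : 1 <= h <= Nn n -> 1 <= bitsum n h.
Proof.
move=> /exists_bit [j ej]; rewrite /bitsum (bigD1 j) //= ej; lia.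
Qed.

Lemma bitsum_pow n (i : 'I_n) : bitsum n (2 ^ i) = 1.
Proof.
rewrite /bitsum (bigD1 i) //= eps_pow eqxx big1 // => k /negbTE ki.
by rewrite eps_pow ki.
Qed.

Lemma single_pow n h (i : 'I_n) : 1 <= h <= Nn n -> bitsum n h <= 1 ->
  eps i h = 1 -> h = 2 ^ i.
Proof.
move=> /andP[_ hN] bs ei; apply: (@bits_eqN n) => //; first by case/andP: (pow_range i).
move=> k; rewrite eps_pow; case: eqP => [->|/eqP ki] //.
move: bs; rewrite /bitsum (bigD1 i) //= ei (bigD1 k) //=; lia.
Qed.

Lemma prec_bitsum n h l : prec n h l -> bitsum n l <= bitsum n h -> prec n l h.
Proof.
move=> /forallP P bs; apply/forallP => j.
have E : bitsum n l = bitsum n h + \sum_(k < n) (eps k l - eps k h).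
  rewrite /bitsum -big_split; apply: eq_bigr => k _ /=; have := P k; lia.
have : \sum_(k < n) (eps k l - eps k h) == 0 by lia.
rewrite sum_nat_eq0 => /forallP /(_ j) /=; lia.
Qed.

Definition av n (w : nat -> nat) (j : nat) := \sum_(1 <= h < (Nn n).+1) eps j h * w h.

Definition chain n (w : nat -> nat) := forall h l, 1 <= h <= Nn n -> 1 <= l <= Nn n ->
  0 < w h -> 0 < w l -> prec n h l || prec n l h.

Lemma sum_delta (T : Type) (idx : T) (op : Monoid.com_law idx) N (F : nat -> T) M :
  1 <= M <= N ->
  \big[op/idx]_(1 <= h < N.+1) (if h == M then F h else idx) = F M.
Proof.
move=> MN; rewrite (bigD1_seq M) ?iota_uniq ?mem_index_iota ?ltnS //= eqxx.
rewrite big1_seq ?Monoid.mulm1 // => i /andP[/negbTE -> _] //.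
Qed.

Lemma sum_deltan N (F : nat -> nat) M : 1 <= M <= N ->
  \sum_(1 <= h < N.+1) F h * (h == M) = F M.
Proof.
move=> MN; rewrite (bigD1_seq M) ?iota_uniq ?mem_index_iota ?ltnS //= eqxx muln1.
rewrite big1_seq ?addn0 // => i /andP[/negbTE -> _]; by rewrite muln0.
Qed.

Lemma sum_ge n (F : nat -> nat) M : 1 <= M <= n -> F M <= \sum_(1 <= h < n.+1) F h.
Proof.
move=> MN; rewrite (bigD1_seq M) ?iota_uniq ?mem_index_iota ?ltnS //=; lia.
Qed.

Lemma sum_pos_ex n (F : nat -> nat) : 0 < \sum_(1 <= h < n.+1) F h ->
  exists2 h, 1 <= h <= n & 0 < F h.
Proof.
move=> H; case: (boolP [exists h : 'I_n.+1, (1 <= h) && (0 < F h)]).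
  by case/existsP => h /andP[h1 Fh]; exists h => //; rewrite h1 -ltnS ltn_ord.
rewrite negb_exists => /forallP A; move: H; rewrite big1_seq // => i /andP[_].
rewrite mem_index_iota => /andP[i1 iN]; have := A (Ordinal iN); rewrite /= i1 /=; lia.
Qed.

Lemma ord_sum_pos_ex K (F : nat -> nat) : 0 < \sum_(t < K) F t -> exists t : 'I_K, 0 < F t.
Proof.
move=> H; case: (pickP (fun t : 'I_K => 0 < F t)) => [t Ht|A]; first by exists t.
by move: H; rewrite big1 // => t _; have := A t; rewrite /=; lia.
Qed.

Lemma chain_max n w : chain n w -> (exists2 h, 1 <= h <= Nn n & 0 < w h) ->
  exists M, [/\ 1 <= M <= Nn n, 0 < w M &
      forall h, 1 <= h <= Nn n -> 0 < w h -> prec n h M].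
Proof.
move=> C [h /andP[h1 hN] wh].
have hlt : h < (Nn n).+1 by rewrite ltnS.
pose h0 := Ordinal hlt.
have P0 : (fun i : 'I_(Nn n).+1 => (1 <= i) && (0 < w i)) h0 by rewrite /= h1 wh.
case: (@arg_maxnP _ h0 (fun i : 'I_(Nn n).+1 => (1 <= i) && (0 < w i)) (fun i => bitsum n i) P0) => M /andP[M1 wM] Mmax.
exists M; split => //; first by rewrite M1 -ltnS ltn_ord.
move=> l /andP[l1 lN] wl.
have Ml : 1 <= M <= Nn n by rewrite M1 -ltnS ltn_ord.
case/orP: (C l M (introT andP (conj l1 lN)) Ml wl wM) => // pM.
apply: prec_bitsum => //.
have ll : l < (Nn n).+1 by rewrite ltnS.
by apply: (Mmax (Ordinal ll)); rewrite /= l1 wl.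
Qed.

Lemma av_pos n w M (j : 'I_n) : 1 <= M <= Nn n -> 0 < w M ->
  (forall h, 1 <= h <= Nn n -> 0 < w h -> prec n h M) ->
  (0 < av n w j) = (eps j M == 1).
Proof.
move=> MN wM Mmax; apply/idP/idP.
  move/sum_pos_ex => [h hN]; have := Mmax h hN.
  have := eps_le1 j M; have := eps_le1 j h.
  case: (posnP (w h)) => [->|wh]; first by rewrite muln0.
  move=> e1 e2 /(_ isT) /forallP /(_ j) /= le; move: e1 e2 le.
  case: (eps j h) => [|[|]] //; rewrite ?mul0n //; case: (eps j M) => [|[|]] //.
move/eqP=> ej; apply: leq_trans (sum_ge (fun h => eps j h * w h) MN); rewrite ej; lia.
Qed.

Lemma av_pos_ex n w (j : 'I_n) : 0 < av n w j ->
  exists2 h, 1 <= h <= Nn n & 0 < w h /\ eps j h = 1.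
Proof.
move/sum_pos_ex => [h hN Fh]; exists h => //; move: Fh; have := eps_le1 j h.
case: (eps j h) => [|[|]] //; rewrite ?mul0n ?mul1n // => _ ->.
Qed.

Lemma av_split n (w1 w : nat -> nat) M j : 1 <= M <= Nn n ->
  (forall h, w h = w1 h + (h == M)) -> av n w j = av n w1 j + eps j M.
Proof.
move=> MN E; rewrite /av.
under eq_bigr => h _ do rewrite E mulnDr.
rewrite big_split /=; congr (_ + _).
exact: sum_deltan.
Qed.

Lemma chain_uniq n m : forall w1 w2, \sum_(1 <= h < (Nn n).+1) w1 h <= m ->
  chain n w1 -> chain n w2 -> (forall j : 'I_n, av n w1 j = av n w2 j) ->
  forall h, 1 <= h <= Nn n -> w1 h = w2 h.
Proof.
elim: m => [|m IH] w1 w2 mass C1 C2 E.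
- have Z1 : forall h, 1 <= h <= Nn n -> w1 h = 0.
    move=> h hN; have := sum_ge w1 hN; lia.
  move=> h hN; rewrite Z1 //; apply/eqP; rewrite eq_sym -leqn0 leqNgt; apply/negP => wh.
  have [j ej] := exists_bit hN.
  have : 0 < av n w2 j by apply: leq_trans (sum_ge (fun h => eps j h * w2 h) hN); rewrite ej; lia.
  rewrite -E /av big1_seq // => i /andP[_]; rewrite mem_index_iota ltnS => iN.
  by rewrite Z1 ?muln0.
- case: (boolP [exists h : 'I_(Nn n).+1, (1 <= h) && (0 < w1 h)]) => [/existsP [h0 /andP [h01 wh0]] | A].
  + have h0N : 1 <= h0 <= Nn n by rewrite h01 -ltnS ltn_ord.
    have [M1 [M1N wM1 M1max]] := chain_max C1 (ex_intro2 _ _ (nat_of_ord h0) h0N wh0).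
    have [j0 ej0] := exists_bit M1N.
    have : 0 < av n w2 j0 by rewrite -E (av_pos _ M1N wM1 M1max) ej0.
    case/av_pos_ex => h2 h2N [wh2 _].
    have [M2 [M2N wM2 M2max]] := chain_max C2 (ex_intro2 _ _ h2 h2N wh2).
    have eM : M1 = M2.
      apply: (bits_eqN (n := n)); first (by case/andP: M1N); first by case/andP: M2N.
      move=> j; have := av_pos j M1N wM1 M1max; have := av_pos j M2N wM2 M2max.
      rewrite E => -> e; have := eps_le1 j M1; have := eps_le1 j M2; move: e.
      case: (eps j M1) => [|[|]]; case: (eps j M2) => [|[|]] //.
    subst M2.
    pose v1 h := w1 h - (h == M1); pose v2 h := w2 h - (h == M1).
    have V1 : forall h, w1 h = v1 h + (h == M1).
      by move=> h; rewrite /v1; case: eqP => [->|]; lia.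
    have V2 : forall h, w2 h = v2 h + (h == M1).
      by move=> h; rewrite /v2; case: eqP => [->|]; lia.
    have IHv := IH v1 v2.
    move=> h hN; rewrite V1 V2 IHv //.
    * move: mass; rewrite (@eq_bigr _ _ _ _ _ _ w1 (fun h => v1 h + (h == M1))) //.
      rewrite big_split /=.
      have -> : \sum_(1 <= i < (Nn n).+1) (i == M1) = 1.
        rewrite (eq_bigr (fun i => (fun _ => 1) i * (i == M1))) ?sum_deltan //.
        by move=> i _; rewrite mul1n.
      lia.
    * move=> a b aN bN va vb; apply: C1 => //; rewrite V1; lia.
    * move=> a b aN bN va vb; apply: C2 => //; rewrite V2; lia.
    * move=> j; have := E j; rewrite (av_split j M1N V1) (av_split j M1N V2); lia.
  + move: A; rewrite negb_exists => /forallP A.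
    have Z1 : forall h, 1 <= h <= Nn n -> w1 h = 0.
      move=> h /andP[h1 hN]; have hlt : h < (Nn n).+1 by rewrite ltnS.
      have := A (Ordinal hlt); rewrite /= h1 /=; lia.
    move=> h hN; rewrite Z1 //; apply/eqP; rewrite eq_sym -leqn0 leqNgt; apply/negP => wh.
    have [j ej] := exists_bit hN.
    have : 0 < av n w2 j by apply: leq_trans (sum_ge (fun h => eps j h * w2 h) hN); rewrite ej; lia.
    rewrite -E /av big1_seq // => i /andP[_]; rewrite mem_index_iota ltnS => iN.
    by rewrite Z1 ?muln0.
Qed.

Definition cw n (a : 'I_n -> nat) K h := \sum_(t < K) (h == code (fun j : 'I_n => t < a j)).

Lemma cw_pos n (a : 'I_n -> nat) K h : 0 < cw a K h ->
  exists t : 'I_K, h = code (fun j : 'I_n => t < a j).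
Proof.
rewrite /cw => /(ord_sum_pos_ex (F := fun t => h == code (fun j : 'I_n => t < a j))) [t].
by case: eqP => // ->; exists t.
Qed.

Lemma cw_chain n (a : 'I_n -> nat) K : chain n (cw a K).
Proof.
move=> h l _ _ /cw_pos [t ->] /cw_pos [s ->].
case: (leqP t s) => ts; apply/orP; [right|left]; apply/forallP => j; rewrite !eps_code;
  case: ltnP => //; case: ltnP => //; lia.
Qed.

Lemma sum_lt_ord K a : a <= K -> \sum_(t < K) (t < a) = a.
Proof.
move=> aK; rewrite -(big_mkord xpredT (fun t => nat_of_bool (t < a))).
rewrite (big_cat_nat _ (n := a)) //=.
have -> : \sum_(a <= i < K) (i < a) = 0.
  by rewrite big1_seq // => i /andP[_]; rewrite mem_index_iota => /andP[ai _]; rewrite ltnNge ai.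
rewrite addn0 big_nat_cond (eq_bigr (fun _ => 1)); last by move=> i /andP[/andP[_ ->]].
by rewrite -big_nat_cond sum_nat_const_nat subn0 muln1.
Qed.

Lemma av_cw n (a : 'I_n -> nat) K (j : 'I_n) : a j <= K -> av n (cw a K) j = a j.
Proof.
move=> aK; rewrite /av /cw.
under eq_bigr => h _ do rewrite big_distrr /=.
rewrite exchange_big /= -[RHS](sum_lt_ord aK); apply: eq_bigr => t _.
set c := code _.
have cN := code_leN (fun j : 'I_n => t < a j).
case: (posnP c) => [c0|cpos].
  rewrite big1_seq; last first.
    move=> i /andP[_]; rewrite mem_index_iota c0 => /andP[i1 _].
    by rewrite (_ : (i == 0) = false) ?muln0 //; apply/eqP; lia.
  by have := eps_code (fun j : 'I_n => t < a j) j; rewrite -/c c0 /eps div0n mod0n => <-.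
rewrite sum_deltan ?cpos ?cN // /c eps_code //.
Qed.

Definition yv n (z : {ffun 'I_(Nn n) -> int}) (j : nat) : int :=
  (\prod_(1 <= h < (Nn n).+1) zh z h ^+ eps j h)%R.

Definition nz n (z : {ffun 'I_(Nn n) -> int}) := forall h, 1 <= h <= Nn n -> zh z h != 0%R.

Lemma sign_nz n (z : {ffun 'I_(Nn n) -> int}) : A0_sign z -> nz z.
Proof.
move=> S h hN; have := S h hN; case: ifP => // _; by rewrite lt0r => /andP[].
Qed.

Lemma zh_ord N (z : {ffun 'I_N -> int}) (k : 'I_N) : zh z k.+1 = z k.
Proof. by rewrite /zh /= valK. Qed.

Lemma zh_ffun N (F : nat -> int) h : 1 <= h <= N ->
  zh [ffun k : 'I_N => F k.+1] h = F h.
Proof.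
case/andP=> h1 hN; have hlt : h.-1 < N by lia.
by rewrite /zh (insubT (fun i => i < N) hlt) /= ffunE /=; congr F; lia.
Qed.

Lemma logn_prod p (r : seq nat) (P : pred nat) (F : nat -> nat) :
  (forall i, P i -> 0 < F i) ->
  logn p (\prod_(i <- r | P i) F i) = \sum_(i <- r | P i) logn p (F i).
Proof.
move=> pos; elim: r => [|x r IH]; first by rewrite !big_nil logn1.
rewrite !big_cons; case: ifP => // Px.
have Q : 0 < \prod_(i <- r | P i) F i.
  by apply: (big_ind (fun m => 0 < m)) => // u v; rewrite muln_gt0 => -> ->.
by rewrite lognM ?IH ?pos.
Qed.

Lemma abs_prod (r : seq nat) (F : nat -> int) :
  `|(\prod_(i <- r) F i)%R|%N = \prod_(i <- r) `|F i|%N.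
Proof. elim: r => [|x r IH]; by rewrite ?big_nil // !big_cons abszM IH. Qed.

Lemma abs_yv n (z : {ffun 'I_(Nn n) -> int}) j :
  `|yv z j|%N = \prod_(1 <= h < (Nn n).+1) `|zh z h|%N ^ eps j h.
Proof.
rewrite /yv abs_prod.
by apply: eq_bigr => h _; rewrite abszX.
Qed.

Lemma logn_yv n (z : {ffun 'I_(Nn n) -> int}) p j : nz z ->
  logn p `|yv z j| = av n (fun h => logn p `|zh z h|) j.
Proof.
move=> Z; rewrite abs_yv /av big_nat_cond logn_prod.
  rewrite -big_nat_cond; apply: eq_bigr => h _; by rewrite lognX.
move=> h /andP[/andP[h1 hN] _]; rewrite expn_gt0 absz_gt0 Z ?orbT //; by rewrite h1 -ltnS.
Qed.

Lemma logn_pos_dvd p m : prime p -> 0 < m -> (0 < logn p m) = (p %| m).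
Proof. by move=> pp m0; rewrite logn_gt0 mem_primes pp m0. Qed.

Lemma chain_red n (z : {ffun 'I_(Nn n) -> int}) p : reduced z -> nz z -> prime p ->
  chain n (fun h => logn p `|zh z h|).
Proof.
move=> R Z pp h l hN lN wh wl; apply/negPn/negP; rewrite negb_or => /andP[nhl nlh].
have := R h l hN lN nhl nlh; rewrite /gcdz => /eqP; rewrite -[_ == _]/(_ == 1%N).
have zh0 : 0 < `|zh z h| by rewrite absz_gt0 Z.
have zl0 : 0 < `|zh z l| by rewrite absz_gt0 Z.
rewrite logn_pos_dvd // in wh; rewrite logn_pos_dvd // in wl.
have : p %| gcdn `|zh z h| `|zh z l| by rewrite dvdn_gcd wh wl.
move=> pg /eqP g1; move: pg; rewrite g1 dvdn1 => /eqP p1; by rewrite p1 in pp.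
Qed.

Lemma logn_eq_z n (z1 z2 : {ffun 'I_(Nn n) -> int}) h :
  nz z1 -> nz z2 -> reduced z1 -> reduced z2 ->
  (forall j : 'I_n, yv z1 j = yv z2 j) -> 1 <= h <= Nn n -> `|zh z1 h| = `|zh z2 h|.
Proof.
move=> Z1 Z2 R1 R2 E hN.
apply: eqn_from_log; rewrite ?absz_gt0 ?Z1 ?Z2 // => p.
have [pp|npp] := boolP (prime p); last first.
  have L0 : forall m, logn p m = 0 by move=> m; rewrite lognE (negbTE npp).
  by rewrite !L0.
apply: (chain_uniq (leqnn _) (chain_red R1 Z1 pp) (chain_red R2 Z2 pp)) => // j.
by rewrite -!logn_yv // E.
Qed.

Lemma yv_split n (z : {ffun 'I_(Nn n) -> int}) j h : 1 <= h <= Nn n ->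
  yv z j = (zh z h ^+ eps j h * \prod_(1 <= l < (Nn n).+1 | l != h) zh z l ^+ eps j l)%R.
Proof.
move=> hN; by rewrite /yv (bigD1_seq h) ?iota_uniq ?mem_index_iota ?ltnS.
Qed.

Lemma z_uniq n (z1 z2 : {ffun 'I_(Nn n) -> int}) :
  A0_sign z1 -> A0_sign z2 -> reduced z1 -> reduced z2 ->
  (forall j : 'I_n, yv z1 j = yv z2 j) -> z1 = z2.
Proof.
move=> S1 S2 R1 R2 E.
have Z1 := sign_nz S1; have Z2 := sign_nz S2.
have A := logn_eq_z Z1 Z2 R1 R2 E.
have big : forall h, 1 <= h <= Nn n -> 1 < bitsum n h -> zh z1 h = zh z2 h.
  move=> h hN b; have := S1 h hN; have := S2 h hN; rewrite b => p2 p1.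
  by rewrite -(gtz0_abs p1) -(gtz0_abs p2) (A h hN).
have all : forall h, 1 <= h <= Nn n -> zh z1 h = zh z2 h.
  move=> h hN; case: (ltnP 1 (bitsum n h)) => b; first exact: big.
  have [j ej] := exists_bit hN.
  have := E j; rewrite (yv_split z1 j hN) (yv_split z2 j hN) ej !expr1.
  have -> : (\prod_(1 <= l < (Nn n).+1 | l != h) zh z1 l ^+ eps j l =
             \prod_(1 <= l < (Nn n).+1 | l != h) zh z2 l ^+ eps j l)%R.
    rewrite big_nat_cond [RHS]big_nat_cond; apply: eq_bigr => l /andP[lN lh].
    have := eps_le1 j l; case El: (eps j l) => [|[|]] // _; rewrite ?expr0 // !expr1.
    apply: big => //; case: (ltnP 1 (bitsum n l)) => // bl.
    by have := single_pow lN bl El; have := single_pow hN b ej => <- /eqP; rewrite (negbTE lh).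
  move/mulIf; apply.
  rewrite prodf_seq_neq0; apply/allP => l; rewrite mem_index_iota => lN; apply/implyP => _.
  by rewrite expf_neq0 // Z2 // -ltnS.
apply/ffunP => k; rewrite -!zh_ord; apply: all; have := ltn_ord k; lia.
Qed.

Lemma yv_nz n (z : {ffun 'I_(Nn n) -> int}) j : nz z -> yv z j != 0%R.
Proof.
move=> Z; rewrite /yv prodf_seq_neq0; apply/allP => l; rewrite mem_index_iota => lN.
by apply/implyP => _; rewrite expf_neq0 // Z // -ltnS.
Qed.

Lemma N_range n : 0 < n -> 1 <= Nn n <= Nn n.
Proof. move=> n0; rewrite leqnn andbT /Nn; have : 2 ^ 1 <= 2 ^ n by rewrite leq_exp2l. lia. Qed.

Lemma allyv_zN n (z : {ffun 'I_(Nn n) -> int}) p : 0 < n -> prime p -> nz z -> reduced z ->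
  (forall j : 'I_n, p %| `|yv z j|) <-> p %| `|zh z (Nn n)|.
Proof.
move=> n0 pp Z R.
have NN := N_range n0.
have zN0 : 0 < `|zh z (Nn n)| by rewrite absz_gt0 Z.
have y0 : forall j, 0 < `|yv z j| by move=> j; rewrite absz_gt0 yv_nz.
split.
- move=> D; pose j0 : 'I_n := Ordinal n0.
  have C := chain_red R Z pp.
  have : 0 < av n (fun h => logn p `|zh z h|) j0 by rewrite -logn_yv // logn_pos_dvd.
  case/av_pos_ex => h hN [wh _].
  have [M [MN wM Mmax]] := chain_max C (ex_intro2 _ _ h hN wh).
  have eM : M = Nn n.
    apply: (bits_eqN (n := n)); first (by case/andP: MN); first by case/andP: NN.
    move=> j; rewrite eps_N; apply/eqP; rewrite -(av_pos j MN wM Mmax).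
    by rewrite -logn_yv // logn_pos_dvd.
  by move: wM; rewrite eM logn_pos_dvd.
- move=> D j; rewrite -logn_pos_dvd // logn_yv //.
  apply: leq_trans (sum_ge (fun h => eps j h * logn p `|zh z h|) NN).
  by rewrite eps_N mul1n logn_pos_dvd.
Qed.

Lemma gcdzs_dvd (d : int) s : (d %| gcdzs s)%Z = all (dvdz d) s.
Proof. elim: s => [|x s IH]; first exact: dvdz0. by rewrite /gcdzs /= dvdz_gcd -/(gcdzs s) IH. Qed.

Lemma gcdzs_pos s : gcdzs s = Posz `|gcdzs s|.
Proof. by case: s. Qed.

Lemma gcdzs1 s : gcdzs s = 1%R <-> forall p, prime p -> ~~ all (fun x : int => p %| `|x|) s.
Proof.
split.
- move=> g1 p pp; apply/negP => A.
  have : (Posz p %| gcdzs s)%Z by rewrite gcdzs_dvd.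
  rewrite g1 => D; have : p %| 1 by exact: D.
  rewrite dvdn1 => /eqP p1; by rewrite p1 in pp.
- move=> H; rewrite gcdzs_pos; congr Posz.
  case E: `|gcdzs s| => [|[|g]] //.
  + have D : (Posz 2 %| gcdzs s)%Z by change (2 %| `|gcdzs s|); rewrite E.
    by have := H 2 isT; rewrite -[all _ _]/(all (dvdz (Posz 2)) s) -gcdzs_dvd D.
  + have [p pp pd] := @pdivP g.+2 isT.
    have D : (Posz p %| gcdzs s)%Z by change (p %| `|gcdzs s|); rewrite E.
    by have := H p pp; rewrite -[all _ _]/(all (dvdz (Posz p)) s) -gcdzs_dvd D.
Qed.

Lemma phi1E n (x' : {ffun 'I_n -> int}) (z : {ffun 'I_(Nn n) -> int}) (i : 'I_n) :
  (phi (x', z)).1 i = (zh z (2 ^ i) * x' i)%R.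
Proof. by rewrite /phi ffunE. Qed.

Lemma phi2E n (x' : {ffun 'I_n -> int}) (z : {ffun 'I_(Nn n) -> int}) (j : 'I_n) :
  (phi (x', z)).2 j = yv z j.
Proof. by rewrite /phi ffunE. Qed.

Lemma gcd_equiv n (x' : {ffun 'I_n -> int}) (z : {ffun 'I_(Nn n) -> int}) :
  0 < n -> A0_sign z -> reduced z -> A0_gcd x' z <-> B_gcd (phi (x', z)).
Proof.
move=> n0 S R; have Z := sign_nz S.
have key : forall p, prime p ->
  all (fun x : int => p %| `|x|) (zh z (Nn n) :: [seq (x' i * zh z (2 ^ i))%R | i <- enum 'I_n]) =
  all (fun x : int => p %| `|x|) ([seq (phi (x', z)).1 i | i <- enum 'I_n] ++
                                  [seq (phi (x', z)).2 i | i <- enum 'I_n]).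
  move=> p pp; apply/allP/allP.
  - move=> H x; rewrite mem_cat => /orP[] /mapP [i _ ->].
    + rewrite phi1E mulrC; apply: H; rewrite in_cons; apply/orP; right.
      by apply/mapP; exists i; rewrite ?mem_enum.
    + rewrite phi2E; apply: (proj2 (allyv_zN n0 pp Z R)); apply: H; exact: mem_head.
  - move=> H x; rewrite in_cons => /orP[/eqP -> | /mapP [i _ ->]].
    + apply: (proj1 (allyv_zN n0 pp Z R)) => j; rewrite -(phi2E x'); apply: H.
      rewrite mem_cat; apply/orP; right; by apply/mapP; exists j; rewrite ?mem_enum.
    + rewrite mulrC -(phi1E x'); apply: H.
      rewrite mem_cat; apply/orP; left; by apply/mapP; exists i; rewrite ?mem_enum.
rewrite /A0_gcd /B_gcd; split => /gcdzs1 H; apply/gcdzs1 => p pp.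
  by rewrite -key // H.
by rewrite key // H.
Qed.

Definition PP n (z : {ffun 'I_(Nn n) -> int}) (f : nat -> nat) : int :=
  (\prod_(1 <= h < (Nn n).+1) zh z h ^+ f h)%R.

Lemma PPM n (z : {ffun 'I_(Nn n) -> int}) f g :
  (PP z f * PP z g)%R = PP z (fun h => f h + g h).
Proof. by rewrite /PP -big_split; apply: eq_bigr => h _; rewrite exprD. Qed.

Lemma PP_eq n (z : {ffun 'I_(Nn n) -> int}) f g :
  (forall h, 1 <= h <= Nn n -> f h = g h) -> PP z f = PP z g.
Proof.
move=> E; rewrite /PP big_nat_cond [RHS]big_nat_cond; apply: eq_bigr => h /andP[hN _].
by rewrite E // -ltnS.
Qed.

Lemma PP_nz n (z : {ffun 'I_(Nn n) -> int}) f : nz z -> PP z f != 0%R.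
Proof.
move=> Z; rewrite /PP prodf_seq_neq0; apply/allP => l; rewrite mem_index_iota => lN.
by apply/implyP => _; rewrite expf_neq0 // Z // -ltnS.
Qed.

Lemma PP_pow n (z : {ffun 'I_(Nn n) -> int}) (i : 'I_n) :
  zh z (2 ^ i) = PP z (fun h => h == 2 ^ i).
Proof.
rewrite /PP (bigD1_seq (2 ^ i)) ?iota_uniq ?mem_index_iota ?ltnS ?pow_range //= eqxx expr1.
rewrite big1_seq ?mulr1 // => h /andP[/negbTE -> _]; by rewrite expr0.
Qed.

Lemma PP_yv n (z : {ffun 'I_(Nn n) -> int}) (i : 'I_n) :
  (\prod_(j < n | j != i) yv z j)%R = PP z (fun h => \sum_(j < n | j != i) eps j h).
Proof.
rewrite /yv /PP exchange_big /=; apply: eq_bigr => h _; by rewrite prodrXr.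
Qed.

Lemma PP_Q n (z : {ffun 'I_(Nn n) -> int}) (i : 'I_n) :
  (\prod_(1 <= h < (Nn n).+1 | (h != Nn n) && (2 <= bitsum n h)%N) zh z h ^+ (1 - eps i h))%R
  = PP z (fun h => if (h != Nn n) && (2 <= bitsum n h) then 1 - eps i h else 0).
Proof.
rewrite /PP big_mkcond /=; apply: eq_bigr => h _; by case: ifP.
Qed.

Definition ee n h := if 2 <= bitsum n h then bitsum n h - 1 else 1.

Lemma expo n (i : 'I_n) h : 1 <= h <= Nn n ->
  (h == 2 ^ i) + \sum_(j < n | j != i) eps j h =
  ee n h + (if (h != Nn n) && (2 <= bitsum n h) then 1 - eps i h else 0).
Proof.
move=> hN.
have bs : bitsum n h = eps i h + \sum_(j < n | j != i) eps j h by rewrite /bitsum (bigD1 i).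
have e1 := eps_le1 i h; have b1 := bitsum_pos hN.
move: bs; set S := \sum_(j < n | j != i) eps j h => bs.
rewrite /ee; case: (leqP 2 (bitsum n h)) => b2.
  have -> : (h == 2 ^ i) = false.
    by apply/negP => /eqP E; move: b2; rewrite E bitsum_pow.
  case: eqP => [E|_] /=.
    have ei : eps i h = 1 by rewrite E eps_N.
    by rewrite add0n addn0 bs ei add1n subn1.
  lia.
rewrite andbF.
have [E|E] : eps i h = 1 \/ eps i h = 0 by lia.
  by rewrite -(single_pow hN _ E) ?eqxx; lia.
have -> : (h == 2 ^ i) = false.
  by apply/negP => /eqP H; move: E; rewrite H eps_pow eqxx.
lia.
Qed.

Lemma eq_key n (x' : {ffun 'I_n -> int}) (z : {ffun 'I_(Nn n) -> int}) :
  (\sum_(i < n) (phi (x', z)).1 i * \prod_(j < n | j != i) (phi (x', z)).2 j)%R =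
  (PP z (ee n) * \sum_(i < n) x' i *
     \prod_(1 <= h < (Nn n).+1 | (h != Nn n) && (2 <= bitsum n h)%N) zh z h ^+ (1 - eps i h))%R.
Proof.
rewrite big_distrr /=; apply: eq_bigr => i _.
rewrite phi1E (eq_bigr (P := fun j : 'I_n => j != i) (fun j => yv z j)); last by move=> j _; rewrite ffunE.
rewrite PP_yv PP_Q PP_pow -mulrA mulrCA PPM [RHS]mulrCA PPM; congr (_ * _)%R.
by apply: PP_eq => h hN; rewrite expo.
Qed.

Lemma dvdn_from_log m k : 0 < m -> 0 < k ->
  (forall p, prime p -> logn p m <= logn p k) -> m %| k.
Proof.
move=> m0 k0 H.
have E : gcdn m k = m.
  apply: eqn_from_log; rewrite ?gcdn_gt0 ?m0 // => p.
  have [pp|npp] := boolP (prime p); last first.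
    have L0 : forall x, logn p x = 0 by move=> x; rewrite lognE (negbTE npp).
    by rewrite !L0.
  by rewrite logn_gcd //; have := H p pp; lia.
by rewrite -E dvdn_gcdr.
Qed.

Lemma logn_prodI (I : Type) p (r : seq I) (P : pred I) (F : I -> nat) :
  (forall i, P i -> 0 < F i) ->
  logn p (\prod_(i <- r | P i) F i) = \sum_(i <- r | P i) logn p (F i).
Proof.
move=> pos; elim: r => [|x r IH]; first by rewrite !big_nil logn1.
rewrite !big_cons; case: ifP => // Px.
have Q : 0 < \prod_(i <- r | P i) F i.
  by apply: (big_ind (fun m => 0 < m)) => // u v; rewrite muln_gt0 => -> ->.
by rewrite lognM ?IH ?pos.
Qed.

Lemma abs_prodI (I : Type) (r : seq I) (P : pred I) (F : I -> int) :
  `|(\prod_(i <- r | P i) F i)%R|%N = \prod_(i <- r | P i) `|F i|%N.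
Proof. elim: r => [|x r IH]; rewrite ?big_nil // !big_cons; case: ifP => _; by rewrite ?abszM IH. Qed.

Lemma dvdzP' (d : nat) (m : int) : (Posz d %| m)%Z = (d %| `|m|).
Proof. by []. Qed.

Lemma div_x n (x y : 'I_n -> int) (u : int) (i : 'I_n) :
  (forall j, y j != 0%R) ->
  (\sum_(m < n) x m * \prod_(k < n | k != m) y k)%R = 0%R -> u != 0%R ->
  (forall p, prime p -> 0 < logn p `|u| -> forall m, m != i ->
      logn p `|u| + logn p `|y m| <= logn p `|y i|) ->
  (u %| x i)%Z.
Proof.
move=> Y Eq U H.
have [->|xi0] := eqVneq (x i) 0%R; first exact: dvdz0.
rewrite /dvdz; apply: dvdn_from_log; rewrite ?absz_gt0 // => p pp.
have [lu0|lupos] := posnP (logn p `|u|); first by rewrite lu0.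
pose f k := logn p `|y k|.
have yk0 : forall k, 0 < `|y k| by move=> k; rewrite absz_gt0.
have Pne : forall m, (\prod_(k < n | k != m) y k)%R != 0%R.
  move=> m; rewrite prodf_seq_neq0; apply/allP => k _; apply/implyP => _; exact: Y.
have lP : forall m, logn p `|(\prod_(k < n | k != m) y k)%R| = \sum_(k < n | k != m) f k.
  by move=> m; rewrite abs_prodI logn_prodI.
pose e := logn p `|u| + \sum_(k < n | k != i) f k.
have Dm : forall m, m != i -> (Posz (p ^ e) %| (x m * \prod_(k < n | k != m) y k)%R)%Z.
  move=> m mi; have [->|xm0] := eqVneq (x m) 0%R; first by rewrite mul0r dvdz0.
  rewrite dvdzP' pfactor_dvdn // ?absz_gt0 ?mulf_neq0 // abszM lognM ?absz_gt0 // lP.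
  rewrite /e (bigD1 m) //= [X in _ <= _ + X](bigD1 i) 1?eq_sym //=.
  rewrite (eq_bigl (fun k => (k != m) && (k != i))); last by move=> k; rewrite andbC.
  have := H p pp lupos m mi; rewrite -/(f m) -/(f i) => h.
  rewrite addnA; apply: leq_trans (leq_addl (logn p `|x m|) _); by rewrite leq_add2r.
have Di : (Posz (p ^ e) %| (x i * \prod_(k < n | k != i) y k)%R)%Z.
  move: Eq; rewrite (bigD1 i) //= => /eqP; rewrite addr_eq0 => /eqP ->.
  by rewrite rpredN; apply: rpred_sum => m mi; exact: Dm.
move: Di; rewrite dvdzP' pfactor_dvdn // ?absz_gt0 ?mulf_neq0 // abszM lognM ?absz_gt0 // lP.
rewrite /e; lia.
Qed.

Lemma PoszX m k : Posz (m ^ k) = ((Posz m) ^+ k)%R.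
Proof. elim: k => [|k IH]; by rewrite ?expn0 ?expr0 // expnS exprS PoszM IH. Qed.

Lemma Posz_prod (I : Type) (r : seq I) (P : pred I) (F : I -> nat) :
  Posz (\prod_(i <- r | P i) F i) = (\prod_(i <- r | P i) Posz (F i))%R.
Proof. elim: r => [|x r IH]; rewrite ?big_nil // !big_cons; case: ifP => _; by rewrite ?PoszM IH. Qed.

Lemma abs_sgz (x : int) : x != 0%R -> `|sgz x|%N = 1.
Proof. by case: sgzP. Qed.

Lemma code_false n : code (fun _ : 'I_n => false) = 0.
Proof. by rewrite /code big1. Qed.

Lemma single_sum n (k j : 'I_n) :
  \sum_(1 <= h < (Nn n).+1) eps k h * (bitsum n h == 1) * eps j h = (k == j).
Proof.
rewrite (bigD1_seq (2 ^ j)) ?iota_uniq ?mem_index_iota ?ltnS ?pow_range //=.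
rewrite eps_pow bitsum_pow eqxx eps_pow eqxx muln1 muln1 big1_seq ?addn0 // => h /andP[hj].
rewrite mem_index_iota ltnS => hN.
have := eps_le1 j h; case E: (eps j h) => [|[|]] // _; rewrite ?muln0 // muln1.
case B: (bitsum n h == 1); rewrite ?muln0 //.
have hh := single_pow hN (eq_leq (eqP B)) E.
by rewrite hh eqxx in hj.
Qed.

Section Constr.
Variable n : nat.
Variable y : {ffun 'I_n -> int}.
Hypothesis Y : forall j, y j != 0%R.

Definition Bnd := (\sum_(j < n) `|y j|).+1.
Definition Mabs h := \prod_(p < Bnd | prime p) p ^ cw (fun j => logn p `|y j|) Bnd h.
Definition Sg h : int := (\prod_(k < n) sgz (y k) ^+ (eps k h * (bitsum n h == 1)))%R.
Definition zc : {ffun 'I_(Nn n) -> int} := [ffun k : 'I_(Nn n) => (Sg k.+1 * Posz (Mabs k.+1))%R].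

Lemma yB j : `|y j| < Bnd.
Proof. by rewrite /Bnd ltnS (bigD1 j) //= leq_addr. Qed.

Lemma aB p j : logn p `|y j| <= Bnd.
Proof.
have y0 : 0 < `|y j| by rewrite absz_gt0.
apply: ltnW; exact: (leq_trans (ltn_logl p y0) (ltnW (yB j))).
Qed.

Lemma Mabs_pos h : 0 < Mabs h.
Proof.
rewrite /Mabs; apply: (big_ind (fun m => 0 < m)) => // [u v|p pp].
  by rewrite muln_gt0 => -> ->.
by rewrite expn_gt0 prime_gt0.
Qed.

Lemma logn_Mabs q h : prime q -> 1 <= h ->
  logn q (Mabs h) = cw (fun j => logn q `|y j|) Bnd h.
Proof.
move=> qp h1; rewrite /Mabs logn_prodI; last by move=> p pp; rewrite expn_gt0 prime_gt0.
under eq_bigr => p pp do rewrite lognX logn_prime //.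
case: (ltnP q Bnd) => qB.
  rewrite (bigD1 (Ordinal qB)) //= eqxx muln1 big1 ?addn0 // => p /andP[_ pq].
  by rewrite (_ : (q == p) = false) ?muln0 //; apply/negP => /eqP E; move/eqP: pq; apply; apply: val_inj; by rewrite /= E.
rewrite big1; last first.
  move=> p _; rewrite (_ : (q == p) = false) ?muln0 //; apply/negP => /eqP E.
  by have := ltn_ord p; rewrite -E; lia.
rewrite /cw big1 // => t _.
rewrite (_ : code (fun j : 'I_n => t < logn q `|y j|) = 0); first by case: h h1.
rewrite /code big1 // => j _; rewrite ltn_log0 //; apply: leq_trans (yB j) qB.
Qed.

Lemma abs_Sg h : `|Sg h|%N = 1.
Proof.
rewrite /Sg abs_prodI big1 // => k _; by rewrite abszX abs_sgz // exp1n.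
Qed.

Lemma zh_zc h : 1 <= h <= Nn n -> zh zc h = (Sg h * Posz (Mabs h))%R.
Proof. move=> hN; by rewrite /zc (zh_ffun (fun x => (Sg x * Posz (Mabs x))%R) hN). Qed.

Lemma abs_zc h : 1 <= h <= Nn n -> `|zh zc h|%N = Mabs h.
Proof. by move=> hN; rewrite zh_zc // abszM abs_Sg mul1n. Qed.

Lemma sign_zc : A0_sign zc.
Proof.
move=> h hN; rewrite zh_zc //; case: ifP => b.
  rewrite /Sg big1 ?mul1r; last first.
    move=> k _; rewrite (_ : (bitsum n h == 1) = false) ?muln0 ?expr0 //.
    by apply/negP => /eqP E; move: b; rewrite E.
  by rewrite ltz_nat Mabs_pos.
rewrite mulf_neq0 //; last by rewrite -lt0n Mabs_pos.
rewrite -absz_eq0 abs_Sg //.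
Qed.

Lemma reduced_zc : reduced zc.
Proof.
move=> h l hN lN nhl nlh; rewrite /gcdz !abs_zc //; congr Posz.
have g0 : 0 < gcdn (Mabs h) (Mabs l) by rewrite gcdn_gt0 Mabs_pos.
case E: (gcdn (Mabs h) (Mabs l)) => [|[|g]] //; first by rewrite E in g0.
have [p pp pd] := @pdivP g.+2 isT.
have ph : p %| Mabs h by apply: dvdn_trans pd _; rewrite -E dvdn_gcdl.
have pl : p %| Mabs l by apply: dvdn_trans pd _; rewrite -E dvdn_gcdr.
have h1 : 1 <= h by case/andP: hN.
have l1 : 1 <= l by case/andP: lN.
have wh : 0 < cw (fun j => logn p `|y j|) Bnd h by rewrite -logn_Mabs // logn_pos_dvd // Mabs_pos.
have wl : 0 < cw (fun j => logn p `|y j|) Bnd l by rewrite -logn_Mabs // logn_pos_dvd // Mabs_pos.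
by have := cw_chain hN lN wh wl; rewrite (negbTE nhl) (negbTE nlh).
Qed.

Lemma Sg_prod (j : 'I_n) : (\prod_(1 <= h < (Nn n).+1) Sg h ^+ eps j h)%R = sgz (y j).
Proof.
rewrite /Sg.
under eq_bigr => h _ do rewrite -prodrXl.
under eq_bigr => h _ do under eq_bigr => k _ do rewrite -exprM.
rewrite exchange_big /=.
under eq_bigr => k _ do rewrite prodrXr single_sum.
rewrite (bigD1 j) //= eqxx expr1 big1 ?mulr1 // => k /negbTE ->; by rewrite expr0.
Qed.

Lemma yv_zc (j : 'I_n) : yv zc j = y j.
Proof.
rewrite /yv big_nat_cond.
rewrite (eq_bigr (fun h => (Sg h ^+ eps j h * Posz (Mabs h ^ eps j h))%R)); last first.
  move=> h /andP[hN _]; rewrite zh_zc ?exprMn ?PoszX //; by rewrite -ltnS.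
rewrite big_split /= -big_nat_cond Sg_prod -big_nat_cond -Posz_prod.
rewrite [RHS]intEsg; congr (_ * Posz _)%R.
apply: eqn_from_log; rewrite ?absz_gt0 //.
  apply: (big_ind (fun m => 0 < m)) => // [u v|h _]; first by rewrite muln_gt0 => -> ->.
  by rewrite expn_gt0 Mabs_pos.
move=> q; have [qp|nqp] := boolP (prime q); last first.
  have L0 : forall x, logn q x = 0 by move=> x; rewrite lognE (negbTE nqp).
  by rewrite !L0.
rewrite logn_prodI; last by move=> h _; rewrite expn_gt0 Mabs_pos.
rewrite -[RHS](av_cw (a := fun j => logn q `|y j|) (K := Bnd)) ?aB // /av.
rewrite big_nat_cond [RHS]big_nat_cond; apply: eq_bigr => h /andP[/andP[h1 _] _].
by rewrite lognX logn_Mabs.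
Qed.

Lemma pow_ineq (i : 'I_n) p : prime p -> 0 < logn p `|zh zc (2 ^ i)| ->
  forall m, m != i -> logn p `|zh zc (2 ^ i)| + logn p `|y m| <= logn p `|y i|.
Proof.
move=> pp; rewrite abs_zc ?pow_range // logn_Mabs //; last by case/andP: (pow_range i).
set a := fun j => logn p `|y j|.
move=> /cw_pos [t0 E0] m mi.
have ai : t0 < a i by have := eps_code (fun j : 'I_n => t0 < a j) i; rewrite -E0 eps_pow eqxx; case: ltnP.
have am : a m <= t0.
  by have := eps_code (fun j : 'I_n => t0 < a j) m; rewrite -E0 eps_pow (negbTE mi); case: ltnP.
change (cw a Bnd (2 ^ i) + a m <= a i).
rewrite -[a m](sum_lt_ord (aB p m)) -[a i](sum_lt_ord (aB p i)) /cw -big_split.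
apply: leq_sum => t _ /=.
case: eqP => [E|_].
  have ei := eps_code (fun j : 'I_n => t < a j) i; have em := eps_code (fun j : 'I_n => t < a j) m.
  rewrite -E !eps_pow eqxx (negbTE mi) in ei em.
  by rewrite -/(a m) -/(a i); case: (ltnP t (a i)) ei; case: (ltnP t (a m)) em.
rewrite -/(a m) -/(a i) add0n; case: (ltnP t (a m)) => // tm.
have : t < a i by lia.
by move=> ->.
Qed.

End Constr.

Unset Implicit Arguments. Set Strict Implicit.
Import GRing.Theory Num.Theory.
Local Open Scope ring_scope.

Theorem proposition5 (n : nat) : (3 <= n)%N ->
  [/\ (forall a, @A0 n a -> Bset (phi a)),
      (forall a1 a2, @A0 n a1 -> A0 a2 -> phi a1 = phi a2 -> a1 = a2),
      (forall b, @Bset n b -> exists2 a, A0 a & phi a = b)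
    & (forall a : {ffun 'I_n -> int} * {ffun 'I_(Nn n) -> int},
         A0_eq a.1 a.2 -> A0_sign a.2 -> reduced a.2 ->
         (A0_gcd a.1 a.2 <-> B_gcd (phi a)))].
Proof.
move=> n3; have n0 : (0 < n)%N by apply: leq_trans n3.
split.
- case=> x' z [E G S R] /=.
  have Z := sign_nz S.
  split.
  + apply/prodf_neq0 => j _; rewrite phi2E; exact: yv_nz.
  + by rewrite eq_key E mulr0.
  + by apply/(gcd_equiv x' n0 S R).
- case=> x1 z1 [x2 z2] [E1 G1 S1 R1] [E2 G2 S2 R2] /= P.
  have Ez : z1 = z2.
    apply: z_uniq => // j; rewrite -(phi2E x1) -(phi2E x2); by rewrite P.
  subst z2; congr (_, _); apply/ffunP => i.
  have := congr1 (fun b : {ffun 'I_n -> int} * {ffun 'I_n -> int} => b.1 i) P; rewrite /= !phi1E; apply: mulfI.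
  by apply: sign_nz S1 _ (pow_range i).
- case=> x y [Pn Eq G].
  have Y : forall j, y j != 0 by move=> j; move/prodf_neq0: Pn; apply.
  pose z := zc y.
  have S : A0_sign z := sign_zc Y.
  have R : reduced z := reduced_zc Y.
  have Z := sign_nz S.
  have D : forall i : 'I_n, (zh z (2 ^ i) %| x i)%Z.
    move=> i; apply: (div_x (y := y)) => //; first by apply: Z; exact: pow_range.
    exact: pow_ineq.
  pose x' := [ffun i : 'I_n => (x i %/ zh z (2 ^ i))%Z].
  have Ephi : phi (x', z) = (x, y).
    congr (_, _); apply/ffunP => i; rewrite ?phi1E ?phi2E.
      by rewrite ffunE mulrC divzK.
    exact: yv_zc.
  exists (x', z) => //.
  split => //.
  + have := eq_key x' z; rewrite Ephi Eq => /esym/eqP.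
    by rewrite mulf_eq0 (negbTE (PP_nz (ee n) Z)) /= => /eqP.
  + by apply/(gcd_equiv x' n0 S R); rewrite Ephi.
- case=> x' z /= E S R; exact: gcd_equiv.
Qed.
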